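(* Let $m\ge3$ and let $G$ be an $m$-uniform hypergraph on vertex set $[n]$ with at least one edge. Then the signless Laplacian tensor of $G$ is not completely positive.
   Context: An $m$-uniform hypergraph $G=(V,E)$ with $V=[n]$ has edges that are sets of exactly $m$ distinct vertices. Its adjacency tensor $\mathcal{A}\in\mathbb{S}_{m,n}$ has entries $a_{i_1\ldots i_m}=1/(m-1)!$ if $\{i_1,\dots,i_m\}\in E$ and $0$ otherwise; $\mathcal{D}$ is the diagonal tensor with $d_{i\ldots i}$ equal to the degree of vertex $i$; the signless Laplacian tensor is $\mathcal{Q}=\mathcal{D}+\mathcal{A}$. A tensor $\mathcal{A}\in\mathbb{S}_{m,n}$ (symmetric real $m$th order $n$-dimensional) is completely positive if $\mathcal{A}=\sum_{k=1}^r(u^{(k)})^m$ for some $r\ge1$ and $u^{(k)}\in\mathbb{R}^n_+$, where $(u^m)_{i_1\ldots i_m}=u_{i_1}\cdots u_{i_m}$. *)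

(* Defs.v *)
From HB Require Import structures.
From mathcomp Require Import all_boot all_order all_algebra.
Set Implicit Arguments. Unset Strict Implicit. Unset Printing Implicit Defensive.
Import Order.TTheory GRing.Theory Num.Theory.
Local Open Scope ring_scope.

Definition tensor (R : Type) (m n : nat) := m.-tuple 'I_n -> R.

Definition uniform_hypergraph (m n : nat) (E : {set {set 'I_n}}) : Prop :=
  forall e, e \in E -> #|e| = m.

Definition hdeg (n : nat) (E : {set {set 'I_n}}) (i : 'I_n) : nat :=
  #|[set e in E | i \in e]|.

Definition adj_tensor (R : numFieldType) (m n : nat) (E : {set {set 'I_n}})
  : tensor R m n :=
  fun t => if [set x in t] \in E then ((m.-1)`!)%:R^-1 else 0.

Definition deg_tensor (R : numFieldType) (m n : nat) (E : {set {set 'I_n}})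
  : tensor R m n :=
  fun t => \sum_(i : 'I_n) if all (fun x => x == i) t then (hdeg E i)%:R else 0.

Definition signless_laplacian (R : numFieldType) (m n : nat)
  (E : {set {set 'I_n}}) : tensor R m n :=
  fun t => @deg_tensor R m n E t + @adj_tensor R m n E t.

Definition tpow (R : numFieldType) (m n : nat) (u : 'I_n -> R) : tensor R m n :=
  fun t => \prod_(k < m) u (tnth t k).

Definition completely_positive (R : numFieldType) (m n : nat)
  (A : tensor R m n) : Prop :=
  exists (r : nat) (u : 'I_r -> 'I_n -> R),
    (0 < r)%N /\ (forall k i, 0 <= u k i) /\
    forall t, A t = \sum_(k < r) @tpow R m n (u k) t.

(* Main.v *)
Require Import Defs.
From HB Require Import structures.
From mathcomp Require Import all_boot all_order all_algebra.
Import Order.TTheory GRing.Theory Num.Theory.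
Local Open Scope ring_scope.

Theorem mainTheorem5 (R : realFieldType) (m n : nat) (E : {set {set 'I_n}}) :
  (3 <= m)%N -> uniform_hypergraph m E -> E != set0 ->
  ~ completely_positive (@signless_laplacian R m n E).
Proof.
move=> m3 unif /set0Pn [e eE] [r [u [r0 [u0 Q]]]].
have hs : size (enum e) == m by rewrite -cardE (unif e eE).
pose te := Tuple hs.
have h0 : (0 < m)%N by apply: leq_trans m3.
have h1 : (1 < m)%N by apply: leq_trans m3.
pose o0 := Ordinal h0. pose o1 := Ordinal h1.
pose i := tnth te o0. pose j := tnth te o1.
have ij : i != j.
  rewrite /i /j !(tnth_nth i) /=.
  rewrite nth_uniq ?enum_uniq //= -?cardE ?(unif e eE) //.
pose t1 := [tuple (if k == o0 then j else i) | k < m].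
have t1i : tnth t1 o1 = i by rewrite tnth_mktuple.
have t1j : tnth t1 o0 = j by rewrite tnth_mktuple eqxx.
have tpge0 : forall k t, 0 <= @tpow R m n (u k) t.
  by move=> k t; apply: prodr_ge0 => l _; apply: u0.
have Qt1 : @signless_laplacian R m n E t1 = 0.
  rewrite /signless_laplacian /deg_tensor /adj_tensor.
  rewrite big1 ?add0r; last first.
    move=> x _; case: ifP => // /allP H.
    have := H _ (mem_tnth o0 t1); have := H _ (mem_tnth o1 t1).
    rewrite t1i t1j => /eqP Hi /eqP Hj; by rewrite Hi Hj eqxx in ij.
  case: ifP => // /unif Hc; exfalso.
  have sub : [set x in t1] \subset [set i; j].
    apply/subsetP => x; rewrite inE => /tnthP [k ->].
    rewrite tnth_mktuple !inE; case: ifP => _; by rewrite eqxx ?orbT.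
  have := subset_leq_card sub; rewrite cards2 Hc ij => H.
  by have := leq_trans m3 H.
have zk : forall k, u k i = 0 \/ u k j = 0.
  move=> k.
  have : \sum_(k < r) @tpow R m n (u k) t1 = 0 by rewrite -Q.
  move/psumr_eq0P => H; have := H (fun _ _ => tpge0 _ _) k isT => /eqP.
  rewrite /tpow => /prodf_eq0 [l _ /eqP].
  rewrite tnth_mktuple; case: ifP => _ ->; by [right|left].
have Qte : @signless_laplacian R m n E te = 0.
  rewrite Q big1 // => k _; apply/eqP; rewrite /tpow; apply/prodf_eq0.
  case: (zk k) => H; [exists o0 | exists o1] => //; by rewrite H eqxx.
have : 0 < @signless_laplacian R m n E te.
  rewrite /signless_laplacian; apply: ltr_wpDl.
    by apply: sumr_ge0 => x _; case: ifP.
  rewrite /adj_tensor.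
  have -> : [set x in te] = e by apply/setP => x; rewrite inE mem_enum.
  by rewrite eE invr_gt0 ltr0n fact_gt0.
by rewrite Qte ltxx.
Qed.
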